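(* With the notation of the context, the joint distribution of $(\bar M,T,X,Z,R)$ satisfies $\widetilde p_{\bar M\,T\,X\,Z\,R}=\widetilde q_{\bar M\,T\,X\,Z\,R}$, where $$\widetilde q_{\bar M TXZR}(\bar m,t,x,z,\rho)\triangleq \widetilde p_{XZ|T}(x,z|t)\,2^{-n}\,|\mathcal{R}|^{-1}\,\mathds{1}\{\bar m=F(\rho,t)\},$$ i.e., under $\widetilde q$, $T$ is uniform on $\{0,1\}^n$, $R$ is uniform on $\mathcal{R}$ and independent of $T$, $(X,Z)$ is generated from $T$ by $\widetilde p_{XZ|T}$, and $\bar M=F(R,T)$.
   Context: Let $n\geq r$ be positive integers and identify $\{0,1\}^n$ with the finite field $\mathrm{GF}(2^n)$ (via a fixed basis); $\odot$ denotes field multiplication, $\|$ concatenation of bit strings. Let $\mathcal{R}=\{0,1\}^n\setminus\{\mathbf 0\}$. Let $\bar M$ be uniform on $\{0,1\}^r$, $R$ uniform on $\mathcal{R}$, $R'$ uniform on $\{0,1\}^{n-r}$, mutually independent, and define $T=R^{-1}\odot(\bar M\|R')$. Let $(X,Z)$ be random variables generated from $T$ through a conditional distribution $\widetilde p_{XZ|T}$ (in the paper, the one induced by the sub-block encoder and the eavesdropper's channel), conditionally independent of $(\bar M,R,R')$ given $T$; $\widetilde p$ denotes the resulting joint distribution. Define $F:\mathcal{R}\times\{0,1\}^n\to\{0,1\}^r$ by $F(\rho,t)=(\rho\odot t)|_{1:r}$, the leftmost $r$ bits of $\rho\odot t$. *)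

(* Defs.v *)
From HB Require Import structures.
From mathcomp Require Import all_boot all_order all_algebra all_field.
Set Implicit Arguments. Unset Strict Implicit. Unset Printing Implicit Defensive.
Import Order.TTheory GRing.Theory Num.Theory.
Local Open Scope ring_scope.

Notation bits k := 'rV['F_2]_k.

Definition nzbits (n : nat) := {v : bits n | v != 0}.

(* A fixed identification of {0,1}^n (n = r + k) with the finite field L:
   phi : bits n -> L with inverse psi, phi additive (F_2-linear: basis). *)
Definition field_ident (n : nat) (L : finFieldType)
  (phi : bits n -> L) (psi : L -> bits n) : Prop :=
  [/\ cancel phi psi, cancel psi phi & forall u v, phi (u + v) = phi u + phi v].

Definition bmul (n : nat) (L : finFieldType) (phi : bits n -> L) (psi : L -> bits n)
  (u v : bits n) : bits n := psi (phi u * phi v).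
Definition binv (n : nat) (L : finFieldType) (phi : bits n -> L) (psi : L -> bits n)
  (u : bits n) : bits n := psi ((phi u)^-1).

Definition Tmap (r k : nat) (L : finFieldType) (phi : bits (r + k) -> L)
  (psi : L -> bits (r + k)) (rho : nzbits (r + k)) (m : bits r) (r' : bits k)
  : bits (r + k) :=
  bmul phi psi (binv phi psi (val rho)) (row_mx m r').

Definition Fmap (r k : nat) (L : finFieldType) (phi : bits (r + k) -> L)
  (psi : L -> bits (r + k)) (rho : nzbits (r + k)) (t : bits (r + k)) : bits r :=
  lsubmx (bmul phi psi (val rho) t).

Definition cond_distr (R : numDomainType) (n : nat) (X Z : finType)
  (W : bits n -> X -> Z -> R) : Prop :=
  (forall t x z, 0 <= W t x z) /\ (forall t, \sum_(x : X) \sum_(z : Z) W t x z = 1).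

(* The actual joint distribution p~ of (Mbar, T, X, Z, R): Mbar, R, R'
   independent uniform, T = Tmap R Mbar R', (X,Z) ~ W(.|T) conditionally
   independent of (Mbar,R,R') given T; R' marginalized out. *)
Definition ptilde (R : numFieldType) (r k : nat) (L : finFieldType)
  (phi : bits (r + k) -> L) (psi : L -> bits (r + k)) (X Z : finType)
  (W : bits (r + k) -> X -> Z -> R)
  (m : bits r) (t : bits (r + k)) (x : X) (z : Z) (rho : nzbits (r + k)) : R :=
  \sum_(r' : bits k)
     (2 ^+ r)^-1 * (#|{: nzbits (r + k)}|%:R)^-1 * (2 ^+ k)^-1
     * (t == Tmap phi psi rho m r')%:R * W t x z.

Definition qtilde (R : numFieldType) (r k : nat) (L : finFieldType)
  (phi : bits (r + k) -> L) (psi : L -> bits (r + k)) (X Z : finType)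
  (W : bits (r + k) -> X -> Z -> R)
  (m : bits r) (t : bits (r + k)) (x : X) (z : Z) (rho : nzbits (r + k)) : R :=
  W t x z * (2 ^+ (r + k))^-1 * (#|{: nzbits (r + k)}|%:R)^-1
  * (m == Fmap phi psi rho t)%:R.

(* Main.v *)
Require Import Defs.
From HB Require Import structures.
From mathcomp Require Import all_boot all_order all_algebra all_field.
From mathcomp Require Import ring.
Import GRing.Theory.
Local Open Scope ring_scope.

Theorem lemma4 (R : numFieldType) (r k : nat) (L : finFieldType)
  (phi : 'rV['F_2]_(r + k) -> L) (psi : L -> 'rV['F_2]_(r + k))
  (X Z : finType) (W : 'rV['F_2]_(r + k) -> X -> Z -> R) :
  field_ident phi psi ->
  cond_distr W ->
  forall (m : 'rV['F_2]_r) (t : 'rV['F_2]_(r + k)) (x : X) (z : Z)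
         (rho : nzbits (r + k)),
    ptilde phi psi W m t x z rho = qtilde phi psi W m t x z rho.
Proof.
move=> [phiK psiK phiD] _ m t x z rho.
have phi0 : phi 0 = 0.
  by apply: (addrI (phi 0)); rewrite -phiD !addr0.
have nz : phi (val rho) != 0.
  apply/eqP => h; have := valP rho; rewrite -(phiK (val rho)) h -phi0 phiK.
  by rewrite eqxx.
set b := bmul phi psi (val rho) t.
have key : forall r', (t == Tmap phi psi rho m r') = (b == row_mx m r').
  move=> r'; rewrite /Tmap /bmul /binv /b psiK.
  apply/eqP/eqP => [-> | <-]; rewrite /bmul; first by rewrite psiK mulrA mulfV // mul1r phiK.
  by rewrite psiK mulrA mulVf // mul1r phiK.
have key2 : forall r', (b == row_mx m r') = (lsubmx b == m) && (r' == rsubmx b).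
  move=> r'; rewrite -{1}(hsubmxK b); apply/eqP/andP => [/eq_row_mx [-> ->]|[/eqP-> /eqP->]] //.
rewrite /ptilde /qtilde.
under eq_bigr => r' _ do rewrite key key2.
rewrite (bigD1 (rsubmx b)) //= big1 ?addr0; last first.
  by move=> i /negbTE ->; rewrite andbF mulr0 mul0r.
rewrite eqxx andbT /Fmap -/b [m == _]eq_sym.
rewrite exprD invfM.
case: (lsubmx b == m); rewrite /= ?mulr0 ?mul0r ?mulr1 //.
by ring.
Qed.
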